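(* Fix $\beta>2$ and let $F_\beta(\mathbf{x},r)$, $r_1^\beta$, $r_2^\beta$, $\mathbf{m}_0^\beta(r)$, $\boldsymbol{\sigma}_0^\beta(r)$, $\mathbf{p}^\beta(r)$ be as in the context. Then: (1) $\mathbf{m}_0^\beta(r)$ is a local minimum of $F_\beta(\cdot,r)$ for all $r\in(0,r_2^\beta)$; (2) $\boldsymbol{\sigma}_0^\beta(r)$ is a saddle point of $F_\beta(\cdot,r)$ for all $r>0$; (3) $\mathbf{p}^\beta(r)$ is a local maximum of $F_\beta(\cdot,r)$ for all $r\in(0,r_1^\beta)$, and a saddle point of $F_\beta(\cdot,r)$ for all $r\in(r_1^\beta,r_2^\beta)$.
   Context: $\Xi=\{(x_1,x_2): x_1,x_2\ge0,\ x_1+x_2\le1\}$, $x_0=1-x_1-x_2$, $\mathbf{v}_k=(\cos(2\pi k/3),\sin(2\pi k/3))$, and for $r\ge0$ $$F_\beta(\mathbf{x},r)=-\frac12\Big|\sum_{k=0}^2x_k\mathbf{v}_k\Big|^2+\frac1\beta\sum_{k=0}^2x_k\log(3x_k)+r\,x_0-\frac r2(x_1+x_2)$$ (Potts potential with external field of magnitude $r$ and angle $\pi$). Let $h(t)=-3t(1-2t)\log\frac{1-2t}{t}-3t+1$ on $(0,1/2)$, $f_r(t)=\frac{2}{3(1-r-3t)}\log\frac{1-2t}{t}$, $k_r=(1-r)/3$; for $0<r<1$, $m_0(r)$ is the unique solution in $(0,k_r)$ of $h(t)=r$ (equivalently of $f_r'(t)=0$), and $r\mapsto f_r(m_0(r))$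 is increasing on $(0,1)$ with limit $\infty$ as $r\uparrow 1$. Let $r_2^\beta$ be the unique $r\in(0,1)$ with $f_r(m_0(r))=\beta$, and $r_1^\beta=1-\frac2\beta-\frac{2}{3\beta}\log\big(\frac{3\beta}2-2\big)$ (one has $r_1^\beta<r_2^\beta$). For $r\in(0,r_2^\beta)$, the equation $f_r(t)=\beta$ has exactly three solutions $p_\beta(r)<u_\beta(r)<q_\beta(r)$ in $(0,1/2)$, with $p_\beta(r)\in(0,m_0(r))$, $u_\beta(r)\in(m_0(r),k_r)$, $q_\beta(r)\in(1/3,1/2)$; for every $r>0$ the equation $f_r(t)=\beta$ has exactly one solution $q_\beta(r)$ in $(1/3,1/2)$. Define $\mathbf{m}_0^\beta(r)=(p_\beta(r),p_\beta(r))$, $\mathbf{p}^\beta(r)=(u_\beta(r),u_\beta(r))$ for $r\in(0,r_2^\beta)$, and $\boldsymbol{\sigma}_0^\beta(r)=(q_\beta(r),q_\beta(r))$ for $r>0$; these are critical points of $F_\beta(\cdot,r)$. A saddle point is a critical point where the Hessian (in $(x_1,x_2)$) has one positive and one negative eigenvalue. *)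

(* Defs.v *)
From Stdlib Require Import Reals Lra.
From Coquelicot Require Import Coquelicot.
Open Scope R_scope.

Definition in_Xi (x1 x2 : R) : Prop := 0 <= x1 /\ 0 <= x2 /\ x1 + x2 <= 1.

Definition vx (k : R) : R := cos (2 * PI * k / 3).
Definition vy (k : R) : R := sin (2 * PI * k / 3).

(* Potts potential with external field of magnitude r and angle pi.
   Convention: Stdlib's ln 0 = 0, so x log(3x) = 0 at x = 0 (the usual 0 log 0 = 0). *)
Definition Fbeta (beta r x1 x2 : R) : R :=
  let x0 := 1 - x1 - x2 in
  let sx := x0 * vx 0 + x1 * vx 1 + x2 * vx 2 in
  let sy := x0 * vy 0 + x1 * vy 1 + x2 * vy 2 in
  - / 2 * (sx ^ 2 + sy ^ 2)
  + / beta * (x0 * ln (3 * x0) + x1 * ln (3 * x1) + x2 * ln (3 * x2))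
  + r * x0 - r / 2 * (x1 + x2).

Definition hfun (t : R) : R :=
  - 3 * t * (1 - 2 * t) * ln ((1 - 2 * t) / t) - 3 * t + 1.

Definition ffun (r t : R) : R :=
  2 / (3 * (1 - r - 3 * t)) * ln ((1 - 2 * t) / t).

Definition kr (r : R) : R := (1 - r) / 3.

(* m is m_0(r): the (unique) solution in (0, k_r) of h(t) = r *)
Definition is_m0 (r m : R) : Prop := 0 < m < kr r /\ hfun m = r.

(* r2 is r_2^beta: the (unique) r in (0,1) with f_r(m_0(r)) = beta *)
Definition is_r2 (beta r2 : R) : Prop :=
  0 < r2 < 1 /\ exists m, is_m0 r2 m /\ ffun r2 m = beta.

Definition r1 (beta : R) : R :=
  1 - 2 / beta - 2 / (3 * beta) * ln (3 * beta / 2 - 2).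

Definition local_min_Xi (g : R -> R -> R) (a b : R) : Prop :=
  in_Xi a b /\ exists eps, 0 < eps /\
    forall y1 y2, in_Xi y1 y2 -> (y1 - a) ^ 2 + (y2 - b) ^ 2 < eps ^ 2 ->
      g a b <= g y1 y2.

Definition local_max_Xi (g : R -> R -> R) (a b : R) : Prop :=
  in_Xi a b /\ exists eps, 0 < eps /\
    forall y1 y2, in_Xi y1 y2 -> (y1 - a) ^ 2 + (y2 - b) ^ 2 < eps ^ 2 ->
      g y1 y2 <= g a b.

Definition d1 (g : R -> R -> R) (a b : R) : R := Derive (fun t => g t b) a.
Definition d2 (g : R -> R -> R) (a b : R) : R := Derive (fun s => g a s) b.

Definition critical (g : R -> R -> R) (a b : R) : Prop :=
  is_derive (fun t => g t b) a 0 /\ is_derive (fun s => g a s) b 0.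

Definition hess11 g a b := d1 (d1 g) a b.
Definition hess12 g a b := d2 (d1 g) a b.
Definition hess21 g a b := d1 (d2 g) a b.
Definition hess22 g a b := d2 (d2 g) a b.

Definition eigenvalue2 (h11 h12 h21 h22 l : R) : Prop :=
  exists v1 v2, (v1 <> 0 \/ v2 <> 0) /\
    h11 * v1 + h12 * v2 = l * v1 /\ h21 * v1 + h22 * v2 = l * v2.

Definition saddle (g : R -> R -> R) (a b : R) : Prop :=
  in_Xi a b /\ critical g a b /\
  (exists l, 0 < l /\ eigenvalue2 (hess11 g a b) (hess12 g a b) (hess21 g a b) (hess22 g a b) l) /\
  (exists l, l < 0 /\ eigenvalue2 (hess11 g a b) (hess12 g a b) (hess21 g a b) (hess22 g a b) l).

(* Main.v *)
Require Import Defs.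
From Stdlib Require Import Reals Lra.
From Coquelicot Require Import Coquelicot.
Open Scope R_scope.

Lemma vx0 : vx 0 = 1. Proof. unfold vx. replace (2*PI*0/3) with 0 by field. apply cos_0. Qed.
Lemma vy0 : vy 0 = 0. Proof. unfold vy. replace (2*PI*0/3) with 0 by field. apply sin_0. Qed.
Lemma vx1 : vx 1 = -1/2. Proof. unfold vx. replace (2*PI*1/3) with (2*(PI/3)) by field. apply cos_2PI3. Qed.
Lemma vy1 : vy 1 = sqrt 3 / 2. Proof. unfold vy. replace (2*PI*1/3) with (2*(PI/3)) by field. apply sin_2PI3. Qed.
Lemma vx2 : vx 2 = -1/2. Proof. unfold vx. replace (2*PI*2/3) with (PI/3 + PI) by field.
  rewrite neg_cos, cos_PI3. field. Qed.
Lemma vy2 : vy 2 = - (sqrt 3 / 2). Proof. unfold vy. replace (2*PI*2/3) with (PI/3 + PI) by field.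
  rewrite neg_sin, sin_PI3. reflexivity. Qed.

Definition Ent (x : R) := x * ln (3 * x).

Definition Fc (beta r x1 x2 : R) : R :=
  - / 2 * ((1 - 3/2*(x1+x2))^2 + 3/4*(x1-x2)^2)
  + / beta * (Ent (1-x1-x2) + Ent x1 + Ent x2)
  + r * (1-x1-x2) - r/2*(x1+x2).

Lemma F_eq beta r x1 x2 : Fbeta beta r x1 x2 = Fc beta r x1 x2.
Proof.
  unfold Fbeta, Fc, Ent. rewrite vx0, vy0, vx1, vy1, vx2, vy2.
  assert (H3 : sqrt 3 * sqrt 3 = 3) by (apply sqrt_sqrt; lra).
  assert (E : forall a b c : R, (a * 0 + b * (sqrt 3 / 2) + c * (- (sqrt 3 / 2))) ^ 2 = 3/4*(b-c)^2).
  { intros a b c. transitivity (sqrt 3*sqrt 3/4*(b-c)^2). field. rewrite H3. field. }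
  rewrite E. generalize (/ beta); intro ib. field.
Qed.

Lemma Fc_sym beta r x1 x2 : Fc beta r x1 x2 = Fc beta r x2 x1.
Proof. unfold Fc. replace (1-x2-x1) with (1-x1-x2) by ring. generalize (/ beta); intro ib. field. Qed.

Definition D1c (beta r x1 x2 : R) : R :=
  3/2 - 3*x1 - 3/2*x2 + / beta * (ln (3*x1) - ln (3*(1-x1-x2))) - 3*r/2.

Lemma dF1 beta r x1 x2 : 0 < x1 -> 0 < x2 -> x1 + x2 < 1 ->
  is_derive (fun t => Fbeta beta r t x2) x1 (D1c beta r x1 x2).
Proof.
  intros H1 H2 H3.
  apply is_derive_ext with (fun t => Fc beta r t x2). { intro; now rewrite F_eq. }
  unfold Fc, Ent. auto_derive.
  - repeat split; lra.
  - unfold D1c. replace (1 + - x1 + - x2) with (1 - x1 - x2) by ring. generalize (/ beta); intro ib. field. lra.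
Qed.

Lemma dF2 beta r x1 x2 : 0 < x1 -> 0 < x2 -> x1 + x2 < 1 ->
  is_derive (fun s => Fbeta beta r x1 s) x2 (D1c beta r x2 x1).
Proof.
  intros H1 H2 H3.
  apply is_derive_ext with (fun t => Fbeta beta r t x1).
  { intro t. rewrite !F_eq. apply Fc_sym. }
  apply dF1; lra.
Qed.

Lemma d1_eq beta r a b : 0 < a -> 0 < b -> a + b < 1 -> Defs.d1 (Fbeta beta r) a b = D1c beta r a b.
Proof. intros. unfold Defs.d1. apply is_derive_unique. now apply dF1. Qed.

Lemma d2_eq beta r a b : 0 < a -> 0 < b -> a + b < 1 -> Defs.d2 (Fbeta beta r) a b = D1c beta r b a.
Proof. intros. unfold Defs.d2. apply is_derive_unique. now apply dF2. Qed.

Lemma hess11_eq beta r a b : 0 < a -> 0 < b -> a + b < 1 ->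
  hess11 (Fbeta beta r) a b = -3 + / beta * (/ a + / (1 - a - b)).
Proof.
  intros Ha Hb Hab. unfold hess11, Defs.d1 at 1. apply is_derive_unique.
  apply is_derive_ext_loc with (fun t => D1c beta r t b).
  { apply locally_interval with 0 (1 - b); simpl; try lra.
    intros y Hy1 Hy2. symmetry. apply d1_eq; lra. }
  unfold D1c. auto_derive. { repeat split; lra. }
  replace (1 + - a + - b) with (1 - a - b) by ring. generalize (/ beta); intro ib. field.
  split; lra.
Qed.

Lemma hess12_eq beta r a b : 0 < a -> 0 < b -> a + b < 1 ->
  hess12 (Fbeta beta r) a b = -3/2 + / beta * / (1 - a - b).
Proof.
  intros Ha Hb Hab. unfold hess12, Defs.d2 at 1. apply is_derive_unique.
  apply is_derive_ext_loc with (fun s => D1c beta r a s).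
  { apply locally_interval with 0 (1 - a); simpl; try lra.
    intros y Hy1 Hy2. symmetry. apply d1_eq; lra. }
  unfold D1c. auto_derive. { repeat split; lra. }
  replace (1 + - a + - b) with (1 - a - b) by ring. generalize (/ beta); intro ib. field.
  lra.
Qed.

Lemma hess21_eq beta r a b : 0 < a -> 0 < b -> a + b < 1 ->
  hess21 (Fbeta beta r) a b = -3/2 + / beta * / (1 - a - b).
Proof.
  intros Ha Hb Hab. unfold hess21, Defs.d1 at 1. apply is_derive_unique.
  apply is_derive_ext_loc with (fun t => D1c beta r b t).
  { apply locally_interval with 0 (1 - b); simpl; try lra.
    intros y Hy1 Hy2. symmetry. apply d2_eq; lra. }
  unfold D1c. auto_derive. { repeat split; lra. }
  replace (1 + - b + - a) with (1 - a - b) by ring. generalize (/ beta); intro ib. field.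
  lra.
Qed.

Lemma hess22_eq beta r a b : 0 < a -> 0 < b -> a + b < 1 ->
  hess22 (Fbeta beta r) a b = -3 + / beta * (/ b + / (1 - a - b)).
Proof.
  intros Ha Hb Hab. unfold hess22, Defs.d2 at 1. apply is_derive_unique.
  apply is_derive_ext_loc with (fun s => D1c beta r s a).
  { apply locally_interval with 0 (1 - a); simpl; try lra.
    intros y Hy1 Hy2. symmetry. apply d2_eq; lra. }
  unfold D1c. auto_derive. { repeat split; lra. }
  replace (1 + - b + - a) with (1 - a - b) by ring. generalize (/ beta); intro ib. field.
  split; lra.
Qed.

Definition Sp beta t := -9/2 + / beta * (/ t + 2 * / (1 - t - t)).
Definition Sm beta t := -3/2 + / beta * / t.

Lemma saddle_diag beta r t : 0 < t -> t < 1/2 -> D1c beta r t t = 0 ->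
  ((0 < Sp beta t /\ Sm beta t < 0) \/ (Sp beta t < 0 /\ 0 < Sm beta t)) ->
  saddle (Fbeta beta r) t t.
Proof.
  intros H0 H1 Hc Hs.
  assert (E1 : eigenvalue2 (hess11 (Fbeta beta r) t t) (hess12 (Fbeta beta r) t t)
     (hess21 (Fbeta beta r) t t) (hess22 (Fbeta beta r) t t) (Sp beta t)).
  { rewrite hess11_eq, hess12_eq, hess21_eq, hess22_eq by lra.
    exists 1, 1. split. left; lra. unfold Sp. generalize (/ beta); intro ib.
    split; field; lra. }
  assert (E2 : eigenvalue2 (hess11 (Fbeta beta r) t t) (hess12 (Fbeta beta r) t t)
     (hess21 (Fbeta beta r) t t) (hess22 (Fbeta beta r) t t) (Sm beta t)).
  { rewrite hess11_eq, hess12_eq, hess21_eq, hess22_eq by lra.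
    exists 1, (-1). split. left; lra. unfold Sm. generalize (/ beta); intro ib.
    split; field; lra. }
  split. { unfold in_Xi; lra. }
  split. { split; rewrite <- Hc; [apply dF1 | apply dF2]; lra. }
  destruct Hs as [[A B]|[A B]].
  - split; [exists (Sp beta t) | exists (Sm beta t)]; auto.
  - split; [exists (Sm beta t) | exists (Sp beta t)]; auto.
Qed.

Lemma mvt (f f' : R -> R) a b : a < b -> (forall c, a <= c <= b -> is_derive f c (f' c)) ->
  exists c, a < c < b /\ f b - f a = f' c * (b - a).
Proof.
  intros Hab Hd. destruct (MVT_cor2 f f' a b Hab) as [c [Hc1 Hc2]].
  { intros c Hc. apply is_derive_Reals. now apply Hd. }
  exists c. split; auto.
Qed.

Lemma G_der c : 0 < c -> is_derive (fun v => v - / v - 2 * ln v) c ((c-1)^2 / c^2).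
Proof. intros Hc. auto_derive. lra. field. lra. Qed.

Lemma lnA1 v : 1 <= v -> 2 * ln v <= v - / v.
Proof.
  intros Hv. destruct (Req_dec v 1) as [->|Hne]. { rewrite ln_1. lra. }
  destruct (mvt (fun v => v - / v - 2 * ln v) (fun c => (c-1)^2/c^2) 1 v) as [c [Hc E]]; [lra| |].
  { intros c Hc. apply G_der. lra. }
  cbv beta in E. rewrite ln_1 in E.
  assert (0 <= (c - 1) ^ 2 / c ^ 2). { apply Rmult_le_pos. nra. left. apply Rinv_0_lt_compat. nra. }
  rewrite Rinv_1 in E.
  assert (0 <= (c - 1) ^ 2 / c ^ 2 * (v - 1)) by (apply Rmult_le_pos; lra). lra.
Qed.

Lemma lnA2 v : 0 < v -> v <= 1 -> v - / v <= 2 * ln v.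
Proof.
  intros H0 Hv. destruct (Req_dec v 1) as [->|Hne]. { rewrite ln_1. lra. }
  destruct (mvt (fun v => v - / v - 2 * ln v) (fun c => (c-1)^2/c^2) v 1) as [c [Hc E]]; [lra| |].
  { intros c Hc. apply G_der. lra. }
  cbv beta in E. rewrite ln_1 in E.
  assert (0 <= (c - 1) ^ 2 / c ^ 2). { apply Rmult_le_pos. nra. left. apply Rinv_0_lt_compat. nra. }
  rewrite Rinv_1 in E.
  assert (0 <= (c - 1) ^ 2 / c ^ 2 * (1 - v)) by (apply Rmult_le_pos; lra). lra.
Qed.

Lemma H_der c : 0 < c -> is_derive (fun w => ln w - 2 * (w - 1) / (w + 1)) c ((c-1)^2 / (c * (c+1)^2)).
Proof. intros Hc. auto_derive. lra. field. lra. Qed.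

Lemma lnB1 w : 1 <= w -> 2 * (w - 1) / (w + 1) <= ln w.
Proof.
  intros Hv. destruct (Req_dec w 1) as [->|Hne]. { rewrite ln_1. replace (1-1) with 0 by ring. lra. }
  destruct (mvt (fun w => ln w - 2 * (w - 1) / (w + 1)) (fun c => (c-1)^2 / (c * (c+1)^2)) 1 w) as [c [Hc E]]; [lra| |].
  { intros c Hc. apply H_der. lra. }
  cbv beta in E. rewrite ln_1 in E.
  assert (0 <= (c-1)^2 / (c * (c+1)^2)). { apply Rmult_le_pos. nra. left. apply Rinv_0_lt_compat. nra. }
  replace (2 * (1 - 1) / (1 + 1)) with 0 in E by field.
  assert (0 <= (c-1)^2 / (c * (c+1)^2) * (w - 1)) by (apply Rmult_le_pos; lra). lra.
Qed.

Lemma lnB2 w : 0 < w -> w <= 1 -> ln w <= 2 * (w - 1) / (w + 1).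
Proof.
  intros H0 Hv. destruct (Req_dec w 1) as [->|Hne]. { rewrite ln_1. replace (1-1) with 0 by ring. lra. }
  destruct (mvt (fun w => ln w - 2 * (w - 1) / (w + 1)) (fun c => (c-1)^2 / (c * (c+1)^2)) w 1) as [c [Hc E]]; [lra| |].
  { intros c Hc. apply H_der. lra. }
  cbv beta in E. rewrite ln_1 in E.
  assert (0 <= (c-1)^2 / (c * (c+1)^2)). { apply Rmult_le_pos. nra. left. apply Rinv_0_lt_compat. nra. }
  replace (2 * (1 - 1) / (1 + 1)) with 0 in E by field.
  assert (0 <= (c-1)^2 / (c * (c+1)^2) * (1 - w)) by (apply Rmult_le_pos; lra). lra.
Qed.

Definition psi w := w * ln w - w + 1.

Lemma psi_lower eta w : 0 <= eta -> 0 < w -> w <= 1 + eta -> (w-1)^2 <= psi w * (2*(1+eta)).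
Proof.
  intros He Hw Hw2. unfold psi. destruct (Rle_dec 1 w) as [H1|H1].
  - assert (HL := lnB1 w H1).
    set (Q := (w-1)^2/(w+1)).
    assert (HQ : Q * (w+1) = (w-1)^2) by (unfold Q; field; lra).
    assert (HQ0 : 0 <= Q) by (unfold Q; apply Rmult_le_pos; [nra| left; apply Rinv_0_lt_compat; lra]).
    assert (HP : w * ln w - w + 1 >= Q).
    { assert (w * ln w >= w * (2 * (w - 1) / (w + 1))) by (apply Rle_ge, Rmult_le_compat_l; lra).
      assert (w * (2 * (w - 1) / (w + 1)) - w + 1 = Q) by (unfold Q; field; lra). lra. }
    nra.
  - set (v := sqrt w).
    assert (Hv : v * v = w) by (apply sqrt_sqrt; lra).
    assert (Hv0 : 0 < v) by (apply sqrt_lt_R0; lra).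
    assert (Hv1 : v < 1) by nra.
    assert (Hl : ln w = 2 * ln v) by (rewrite <- Hv, ln_mult; lra).
    assert (HA := lnA2 v Hv0 (Rlt_le _ _ Hv1)).
    assert (HP : w * ln w - w + 1 >= (1-v)^2*(1+v)).
    { rewrite Hl. assert (w * (2 * ln v) >= w * (v - / v)) by (apply Rle_ge, Rmult_le_compat_l; lra).
      assert (w * (v - / v) = v*v*v - v) by (rewrite <- Hv; field; lra).
      assert (v*v*v - v - w + 1 = (1-v)^2*(1+v)) by (rewrite <- Hv; ring). lra. }
    set (P := w * ln w - w + 1) in *.
    assert (E1 : (w-1)^2 = (1-v)^2*(1+v)^2) by (rewrite <- Hv; ring).
    assert (E2 : (1-v)^2*(1+v)^2 <= 2*((1-v)^2*(1+v))).
    { assert (0 <= (1-v)^2*(1+v)) by (apply Rmult_le_pos; [apply pow2_ge_0 | lra]).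
      assert (0 <= (1-v)^2*(1+v) * (1 - v)) by (apply Rmult_le_pos; lra). nra. }
    assert (0 <= (1-v)^2*(1+v)) by (apply Rmult_le_pos; [apply pow2_ge_0 | lra]).
    assert (0 <= P * eta) by (apply Rmult_le_pos; lra). nra.
Qed.

Lemma psi_upper eta w : 0 <= eta -> eta < 1 -> 1 - eta <= w -> psi w * (2*(1-eta)) <= (w-1)^2.
Proof.
  intros He He1 Hw2. unfold psi. destruct (Rle_dec 1 w) as [H1|H1].
  - assert (HA := lnA1 w H1).
    assert (HP : w * ln w - w + 1 <= (w-1)^2/2).
    { assert (w * (2 * ln w) <= w * (w - / w)) by (apply Rmult_le_compat_l; lra).
      assert (w * (w - / w) = w*w - 1) by (field; lra). nra. }
    assert (P1 : (w * ln w - w + 1) * (2*(1-eta)) <= (w-1)^2/2 * (2*(1-eta))) by (apply Rmult_le_compat_r; lra).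
    assert (0 <= (w-1)^2 * eta) by (apply Rmult_le_pos; [apply pow2_ge_0 | lra]). nra.
  - assert (HL := lnB2 w ltac:(lra) ltac:(lra)).
    set (Q := (w-1)^2/(w+1)).
    assert (HQ : Q * (w+1) = (w-1)^2) by (unfold Q; field; lra).
    assert (HQ0 : 0 <= Q) by (unfold Q; apply Rmult_le_pos; [nra| left; apply Rinv_0_lt_compat; lra]).
    assert (HP : w * ln w - w + 1 <= Q).
    { assert (w * ln w <= w * (2 * (w - 1) / (w + 1))) by (apply Rmult_le_compat_l; lra).
      assert (w * (2 * (w - 1) / (w + 1)) - w + 1 = Q) by (unfold Q; field; lra). lra. }
    nra.
Qed.

Lemma Fdiff_id beta r t y1 y2 : 0 < t -> t < 1/2 -> 0 < y1 -> 0 < y2 -> y1 + y2 < 1 ->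
  Fc beta r y1 y2 - Fc beta r t t =
  -3/4*((y1-t)^2 + (y2-t)^2 + (y1+y2-2*t)^2)
  + / beta * ((1-t-t) * psi ((1-y1-y2)/(1-t-t)) + t * psi (y1/t) + t * psi (y2/t))
  + (y1+y2-2*t) * D1c beta r t t.
Proof.
  intros Ht Ht2 Hy1 Hy2 Hy.
  unfold Fc, Ent, psi, D1c.
  rewrite (ln_div (1-y1-y2)), (ln_div y1), (ln_div y2) by lra.
  rewrite (ln_mult 3 (1-y1-y2)), (ln_mult 3 y1), (ln_mult 3 y2), (ln_mult 3 t), (ln_mult 3 (1-t-t)) by lra.
  generalize (/ beta); intro ib. field. lra.
Qed.

Lemma sq_bound a b e : 0 < e -> a^2 + b^2 < e^2 -> -e < a < e.
Proof. intros He H. split; nra. Qed.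

Lemma term_lower eta x y : 0 <= eta -> 0 < x -> 0 < y -> y - x <= eta * x ->
  (y-x)^2/x <= x * psi (y/x) * (2*(1+eta)).
Proof.
  intros He Hx Hy H.
  assert (P := psi_lower eta (y/x) He).
  assert (0 < y/x) by (apply Rdiv_lt_0_compat; lra).
  assert (y / x <= 1 + eta). { apply Rmult_le_reg_r with x; auto. field_simplify; lra. }
  specialize (P ltac:(lra) ltac:(lra)).
  replace ((y-x)^2/x) with (x * (y/x - 1)^2) by (field; lra).
  replace (x * psi (y / x) * (2 * (1 + eta))) with (x * (psi (y / x) * (2 * (1 + eta)))) by ring.
  apply Rmult_le_compat_l; lra.
Qed.

Lemma term_upper eta x y : 0 <= eta -> eta < 1 -> 0 < x -> x - y <= eta * x ->
  x * psi (y/x) * (2*(1-eta)) <= (y-x)^2/x.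
Proof.
  intros He He1 Hx H.
  assert (P := psi_upper eta (y/x) He He1).
  assert (1 - eta <= y / x). { apply Rmult_le_reg_r with x; auto. field_simplify; lra. }
  specialize (P ltac:(lra)).
  replace ((y-x)^2/x) with (x * (y/x - 1)^2) by (field; lra).
  replace (x * psi (y / x) * (2 * (1 - eta))) with (x * (psi (y / x) * (2 * (1 - eta)))) by ring.
  apply Rmult_le_compat_l; lra.
Qed.

Lemma qf_id beta t k d1 d2 : beta <> 0 -> 0 < t -> t < 1/2 ->
  / beta / 2 * (d1^2/t + d2^2/t + (d1+d2)^2/(1-t-t)) - 3/4*k*(d1^2+d2^2+(d1+d2)^2)
  = 1/4*((d1+d2)^2*(Sp beta t - 9/2*(k-1)) + (d1-d2)^2*(Sm beta t - 3/2*(k-1))).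
Proof. intros. unfold Sp, Sm. field. repeat split; lra. Qed.

Lemma local_min_diag beta r t : 0 < beta -> 0 < t -> t < 1/3 -> D1c beta r t t = 0 ->
  0 < Sp beta t -> 0 < Sm beta t -> local_min_Xi (Fbeta beta r) t t.
Proof.
  intros Hb Ht Ht3 Hc Hp Hm.
  set (eta := Rmin (1/2) (Rmin (2/3 * Sm beta t) (2/9 * Sp beta t))).
  assert (He0 : 0 < eta) by (unfold eta; repeat apply Rmin_glb_lt; lra).
  assert (He1 : eta <= 1/2) by apply Rmin_l.
  assert (He2 : eta <= 2/3 * Sm beta t) by (eapply Rle_trans; [apply Rmin_r|apply Rmin_l]).
  assert (He3 : eta <= 2/9 * Sp beta t) by (eapply Rle_trans; [apply Rmin_r|apply Rmin_r]).
  split. { unfold in_Xi; lra. }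
  exists (eta * t / 2). split. { apply Rmult_lt_0_compat; [apply Rmult_lt_0_compat|]; lra. }
  intros y1 y2 Hy Hd.
  assert (Heps : 0 < eta * t / 2) by (apply Rmult_lt_0_compat; [apply Rmult_lt_0_compat|]; lra).
  assert (B1 := sq_bound (y1 - t) (y2 - t) _ Heps Hd).
  assert (B2 := sq_bound (y2 - t) (y1 - t) _ Heps ltac:(lra)).
  assert (Et : eta * t <= eta * (1 - t - t)) by (apply Rmult_le_compat_l; lra).
  assert (Et2 : 0 <= eta * t) by (apply Rmult_le_pos; lra).
  assert (Et3 : eta * t <= t / 2) by nra.
  assert (Hy1 : 0 < y1) by lra. assert (Hy2 : 0 < y2) by lra.
  assert (Hy0 : 0 < 1 - y1 - y2) by lra.
  rewrite !F_eq. cut (0 <= Fc beta r y1 y2 - Fc beta r t t). lra.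
  rewrite Fdiff_id by lra. rewrite Hc.
  set (d1 := y1 - t) in *. set (d2 := y2 - t) in *.
  assert (Hd1 : d1 = y1 - t) by reflexivity. assert (Hd2 : d2 = y2 - t) by reflexivity.
  assert (T0 := term_lower eta (1-t-t) (1-y1-y2) ltac:(lra) ltac:(lra) Hy0 ltac:(lra)).
  assert (T1 := term_lower eta t y1 ltac:(lra) Ht Hy1 ltac:(lra)).
  assert (T2 := term_lower eta t y2 ltac:(lra) Ht Hy2 ltac:(lra)).
  set (a0 := (1-t-t) * psi ((1-y1-y2)/(1-t-t))) in *.
  set (a1 := t * psi (y1/t)) in *. set (a2 := t * psi (y2/t)) in *.
  replace (1 - y1 - y2 - (1 - t - t)) with (- (d1 + d2)) in T0 by (unfold d1, d2; ring).
  replace (y1 - t) with d1 in T1 by reflexivity. replace (y2 - t) with d2 in T2 by reflexivity.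
  replace (y1 + y2 - 2 * t) with (d1 + d2) by (unfold d1, d2; ring).
  set (T := d1^2/t + d2^2/t + (d1+d2)^2/(1-t-t)).
  assert (HT : T <= (a0 + a1 + a2) * (2 * (1 + eta))).
  { unfold T. replace ((- (d1 + d2))^2) with ((d1+d2)^2) in T0 by ring. lra. }
  assert (Q := qf_id beta t (1 + eta) d1 d2 ltac:(lra) Ht ltac:(lra)). fold T in Q.
  assert (Q2 : 0 <= 1/4*((d1+d2)^2*(Sp beta t - 9/2*(1+eta-1)) + (d1-d2)^2*(Sm beta t - 3/2*(1+eta-1)))).
  { assert (0 <= (d1+d2)^2*(Sp beta t - 9/2*(1+eta-1))) by (apply Rmult_le_pos; [apply pow2_ge_0 | lra]).
    assert (0 <= (d1-d2)^2*(Sm beta t - 3/2*(1+eta-1))) by (apply Rmult_le_pos; [apply pow2_ge_0 | lra]). lra. }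
  assert (Hib : 0 < / beta) by (apply Rinv_0_lt_compat; lra).
  set (S := d1 ^ 2 + d2 ^ 2 + (d1 + d2) ^ 2) in *.
  assert (HT2 : / beta * T <= / beta * ((a0 + a1 + a2) * (2 * (1 + eta)))) by (apply Rmult_le_compat_l; lra).
  assert (K : 3/4 * S * (2*(1+eta)) <= / beta * (a0 + a1 + a2) * (2*(1+eta))) by lra.
  apply Rmult_le_reg_r in K; [|lra]. lra.
Qed.

Lemma local_max_diag beta r t : 0 < beta -> 0 < t -> t < 1/3 -> D1c beta r t t = 0 ->
  Sp beta t < 0 -> Sm beta t < 0 -> local_max_Xi (Fbeta beta r) t t.
Proof.
  intros Hb Ht Ht3 Hc Hp Hm.
  set (eta := Rmin (1/2) (Rmin (-2/3 * Sm beta t) (-2/9 * Sp beta t))).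
  assert (He0 : 0 < eta) by (unfold eta; repeat apply Rmin_glb_lt; lra).
  assert (He1 : eta <= 1/2) by apply Rmin_l.
  assert (He2 : eta <= -2/3 * Sm beta t) by (eapply Rle_trans; [apply Rmin_r|apply Rmin_l]).
  assert (He3 : eta <= -2/9 * Sp beta t) by (eapply Rle_trans; [apply Rmin_r|apply Rmin_r]).
  split. { unfold in_Xi; lra. }
  exists (eta * t / 2). split. { apply Rmult_lt_0_compat; [apply Rmult_lt_0_compat|]; lra. }
  intros y1 y2 Hy Hd.
  assert (Heps : 0 < eta * t / 2) by (apply Rmult_lt_0_compat; [apply Rmult_lt_0_compat|]; lra).
  assert (B1 := sq_bound (y1 - t) (y2 - t) _ Heps Hd).
  assert (B2 := sq_bound (y2 - t) (y1 - t) _ Heps ltac:(lra)).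
  assert (Et : eta * t <= eta * (1 - t - t)) by (apply Rmult_le_compat_l; lra).
  assert (Et2 : 0 <= eta * t) by (apply Rmult_le_pos; lra).
  assert (Et3 : eta * t <= t / 2) by nra.
  assert (Hy1 : 0 < y1) by lra. assert (Hy2 : 0 < y2) by lra.
  assert (Hy0 : 0 < 1 - y1 - y2) by lra.
  rewrite !F_eq. cut (Fc beta r y1 y2 - Fc beta r t t <= 0). lra.
  rewrite Fdiff_id by lra. rewrite Hc.
  set (d1 := y1 - t) in *. set (d2 := y2 - t) in *.
  assert (Hd1 : d1 = y1 - t) by reflexivity. assert (Hd2 : d2 = y2 - t) by reflexivity.
  assert (T0 := term_upper eta (1-t-t) (1-y1-y2) ltac:(lra) ltac:(lra) ltac:(lra) ltac:(lra)).
  assert (T1 := term_upper eta t y1 ltac:(lra) ltac:(lra) Ht ltac:(lra)).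
  assert (T2 := term_upper eta t y2 ltac:(lra) ltac:(lra) Ht ltac:(lra)).
  set (a0 := (1-t-t) * psi ((1-y1-y2)/(1-t-t))) in *.
  set (a1 := t * psi (y1/t)) in *. set (a2 := t * psi (y2/t)) in *.
  replace (1 - y1 - y2 - (1 - t - t)) with (- (d1 + d2)) in T0 by (unfold d1, d2; ring).
  replace (y1 - t) with d1 in T1 by reflexivity. replace (y2 - t) with d2 in T2 by reflexivity.
  replace (y1 + y2 - 2 * t) with (d1 + d2) by (unfold d1, d2; ring).
  set (T := d1^2/t + d2^2/t + (d1+d2)^2/(1-t-t)).
  assert (HT : (a0 + a1 + a2) * (2 * (1 - eta)) <= T).
  { unfold T. replace ((- (d1 + d2))^2) with ((d1+d2)^2) in T0 by ring. lra. }
  assert (Q := qf_id beta t (1 - eta) d1 d2 ltac:(lra) Ht ltac:(lra)). fold T in Q.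
  assert (Q2 : 1/4*((d1+d2)^2*(Sp beta t - 9/2*(1-eta-1)) + (d1-d2)^2*(Sm beta t - 3/2*(1-eta-1))) <= 0).
  { assert (0 <= (d1+d2)^2*(-(Sp beta t - 9/2*(1-eta-1)))) by (apply Rmult_le_pos; [apply pow2_ge_0 | lra]).
    assert (0 <= (d1-d2)^2*(-(Sm beta t - 3/2*(1-eta-1)))) by (apply Rmult_le_pos; [apply pow2_ge_0 | lra]). lra. }
  assert (Hib : 0 < / beta) by (apply Rinv_0_lt_compat; lra).
  set (S := d1 ^ 2 + d2 ^ 2 + (d1 + d2) ^ 2) in *.
  assert (HT2 : / beta * ((a0 + a1 + a2) * (2 * (1 - eta))) <= / beta * T) by (apply Rmult_le_compat_l; lra).
  assert (K : / beta * (a0 + a1 + a2) * (2*(1-eta)) <= 3/4 * S * (2*(1-eta))) by lra.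
  apply Rmult_le_reg_r in K; [|lra]. lra.
Qed.

Definition ell t := ln ((1 - 2*t)/t).

Lemma ell_pos t : 0 < t -> t < 1/3 -> 0 < ell t.
Proof.
  intros H1 H2. unfold ell. rewrite <- ln_1. apply ln_increasing. lra.
  apply Rmult_lt_reg_r with t; auto. field_simplify; lra.
Qed.

Lemma ell_neg t : 1/3 < t -> t < 1/2 -> ell t < 0.
Proof.
  intros H1 H2. unfold ell. rewrite <- ln_1. apply ln_increasing.
  apply Rdiv_lt_0_compat; lra.
  apply Rmult_lt_reg_r with t; [lra|]. field_simplify; lra.
Qed.

Lemma h_der c : 0 < c -> c < 1/2 -> is_derive hfun c (-3*(1-4*c)*ell c).
Proof.
  intros H1 H2. assert (0 < (1 - 2*c)/c) by (apply Rdiv_lt_0_compat; lra).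
  unfold hfun, ell. auto_derive.
  { repeat split; try lra. }
  replace ((1 + - (2 * c)) * / c) with ((1 - 2 * c) / c) by (unfold Rdiv; ring). field. lra.
Qed.

Lemma H1 s t : 0 < s -> s < t -> t <= 1/4 -> hfun t < hfun s.
Proof.
  intros Hs Hst Ht.
  destruct (mvt hfun (fun c => -3*(1-4*c)*ell c) s t Hst) as [c [Hc E]].
  { intros c Hc. apply h_der; lra. }
  assert (0 < ell c) by (apply ell_pos; lra).
  assert (0 < (1-4*c) * ell c) by (apply Rmult_lt_0_compat; lra).
  assert (0 < (1-4*c) * ell c * (t - s)) by (apply Rmult_lt_0_compat; lra).
  nra.
Qed.

Lemma h_third : hfun (1/3) = 0.
Proof. unfold hfun. replace ((1 - 2 * (1/3)) / (1/3)) with 1 by field. rewrite ln_1. field. Qed.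

Lemma H2 t : 1/4 <= t -> t < 1/3 -> hfun t < 0.
Proof.
  intros Ht Ht3. rewrite <- h_third.
  destruct (mvt hfun (fun c => -3*(1-4*c)*ell c) t (1/3) Ht3) as [c [Hc E]].
  { intros c Hc. apply h_der; lra. }
  assert (0 < ell c) by (apply ell_pos; lra).
  assert (0 < (4*c-1) * ell c) by (apply Rmult_lt_0_compat; lra).
  assert (0 < (4*c-1) * ell c * (1/3 - t)) by (apply Rmult_lt_0_compat; lra).
  nra.
Qed.

Lemma h_neg2 q : 1/3 < q -> q < 1/2 -> hfun q <= 0.
Proof.
  intros Hq1 Hq2. unfold hfun.
  set (v := q / (1 - 2*q)).
  assert (Hv : 1 <= v). { unfold v. apply Rmult_le_reg_r with (1 - 2*q); [lra|]. field_simplify; lra. }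
  assert (HA := lnA1 v Hv).
  assert (El : ln ((1 - 2*q)/q) = - ln v).
  { unfold v. rewrite <- ln_Rinv. f_equal. field. lra. apply Rdiv_lt_0_compat; lra. }
  rewrite El.
  assert (Ev : v - / v = (q*q - (1-2*q)*(1-2*q)) / (q*(1-2*q))) by (unfold v; field; lra).
  assert (Hq : 0 < q * (1 - 2*q)) by nra.
  assert (K : 3*q*(1-2*q) * (2 * ln v) <= 3*q*(1-2*q) * (v - / v)) by (apply Rmult_le_compat_l; nra).
  rewrite Ev in K.
  replace (3 * q * (1 - 2 * q) * ((q * q - (1 - 2 * q) * (1 - 2 * q)) / (q * (1 - 2 * q))))
    with (3 * (q * q - (1 - 2 * q) * (1 - 2 * q))) in K by (field; lra).
  nra.
Qed.

Lemma crit_of_f beta r t : 0 < t -> t < 1/2 -> 1 - r - 3*t <> 0 -> beta <> 0 ->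
  ffun r t = beta -> D1c beta r t t = 0.
Proof.
  intros H1 H2 Hd Hb Hf.
  assert (El : ell t = 3/2 * beta * (1 - r - 3*t)).
  { rewrite <- Hf. unfold ffun, ell. field. lra. }
  unfold D1c. rewrite (ln_mult 3 t), (ln_mult 3 (1-t-t)) by lra.
  unfold ell in El. rewrite ln_div in El by lra.
  replace (1 - t - t) with (1 - 2*t) by ring.
  assert (El2 : ln (1 - 2*t) = ln t + 3/2 * beta * (1 - r - 3*t)) by lra.
  rewrite El2. field. auto.
Qed.

Lemma Sp_eq beta r t : 0 < t -> t < 1/2 -> 1 - r - 3*t <> 0 -> ell t <> 0 ->
  ffun r t = beta -> Sp beta t = 3 / (2 * ell t * (t * (1 - 2*t))) * (hfun t - r).
Proof.
  intros H1 H2 Hd Hl Hf. rewrite <- Hf. unfold Sp, ffun, hfun. unfold ell in *.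
  replace (1 - t - t) with (1 - 2*t) by ring. field. repeat split; lra.
Qed.

Lemma Sm_eq beta r t : 0 < t -> t < 1/2 -> 1 - r - 3*t <> 0 -> ell t <> 0 ->
  ffun r t = beta -> Sm beta t = 3 / (2 * ell t * t) * ((1 - r - 3*t) - t * ell t).
Proof.
  intros H1 H2 Hd Hl Hf. rewrite <- Hf. unfold Sm, ffun. unfold ell in *.
  field. repeat split; lra.
Qed.

Definition Rf beta t := 1 - 3*t - 2/(3*beta) * ell t.

Lemma R_der beta c : 0 < c -> c < 1/2 -> is_derive (Rf beta) c (-3 + 2/(3*beta) * / (c*(1-2*c))).
Proof.
  intros H1 H2. assert (0 < (1 - 2*c)/c) by (apply Rdiv_lt_0_compat; lra).
  unfold Rf, ell. auto_derive. { repeat split; try lra. }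
  replace ((1 + - (2 * c)) * / c) with ((1 - 2 * c) / c) by (unfold Rdiv; ring).
  generalize (2 / (3*beta)); intro k. field. lra.
Qed.

Lemma Rmono beta a b : 0 < beta -> 0 < a -> a < b -> b < 1/2 ->
  2/(9*beta) < a*(1-2*a) -> 2/(9*beta) < b*(1-2*b) -> Rf beta b < Rf beta a.
Proof.
  intros Hb Ha Hab Hb2 Ia Ib.
  destruct (mvt (Rf beta) (fun c => -3 + 2/(3*beta) * / (c*(1-2*c))) a b Hab) as [c [Hc E]].
  { intros c Hc. apply R_der; lra. }
  assert (Ic : 2/(9*beta) < c*(1-2*c)).
  { destruct (Rle_dec (c + a) (1/2)).
    - assert (c*(1-2*c) - a*(1-2*a) = (c-a)*(1-2*(c+a))) by ring.
      assert (0 <= (c-a)*(1-2*(c+a))) by (apply Rmult_le_pos; lra). lra.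
    - assert (c*(1-2*c) - b*(1-2*b) = (b-c)*(2*(c+b)-1)) by ring.
      assert (0 <= (b-c)*(2*(c+b)-1)) by (apply Rmult_le_pos; lra). lra. }
  assert (Hc0 : 0 < c*(1-2*c)) by nra.
  assert (K : / (c*(1-2*c)) < / (2/(9*beta))).
  { apply Rinv_lt_contravar; auto. apply Rmult_lt_0_compat; auto. apply Rdiv_lt_0_compat; lra. }
  replace (/ (2/(9*beta))) with (9*beta/2) in K by (field; lra).
  assert (K2 : 2/(3*beta) * / (c*(1-2*c)) < 2/(3*beta) * (9*beta/2)).
  { apply Rmult_lt_compat_l; auto. apply Rdiv_lt_0_compat; lra. }
  replace (2/(3*beta) * (9*beta/2)) with 3 in K2 by (field; lra).
  assert (0 < (3 - 2/(3*beta) * / (c*(1-2*c))) * (b - a)) by (apply Rmult_lt_0_compat; lra).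
  lra.
Qed.

Lemma Rf_sol beta r t : 0 < t -> t < 1/2 -> 1 - r - 3*t <> 0 -> beta <> 0 ->
  ffun r t = beta -> Rf beta t = r.
Proof.
  intros H1 H2 Hd Hb Hf.
  assert (El : ell t = 3/2 * beta * (1 - r - 3*t)).
  { rewrite <- Hf. unfold ffun, ell. field. lra. }
  unfold Rf. rewrite El. field. auto.
Qed.

Lemma Rf_star beta : 2 < beta -> Rf beta (2/(3*beta)) = r1 beta.
Proof.
  intros Hb. unfold Rf, r1, ell.
  replace ((1 - 2 * (2 / (3 * beta))) / (2 / (3 * beta))) with (3 * beta / 2 - 2) by (field; lra).
  field. lra.
Qed.

Lemma r1_pos beta : 2 < beta -> 0 < r1 beta.
Proof.
  intros Hb. unfold r1. set (x := 3 * beta / 2 - 2).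
  assert (Hx : 1 < x) by (unfold x; lra).
  assert (HA := lnA1 x ltac:(lra)).
  assert (x - / x < 2 * (x - 1)).
  { assert (x - / x = 2*(x-1) - (x-1)^2/x) by (field; lra).
    assert (0 < (x-1)^2/x) by (apply Rdiv_lt_0_compat; nra). lra. }
  assert (Hl : ln x < x - 1) by lra.
  assert (K : 2/(3*beta) * ln x < 2/(3*beta) * (x - 1)).
  { apply Rmult_lt_compat_l; auto. apply Rdiv_lt_0_compat; lra. }
  replace (2/(3*beta) * (x - 1)) with (1 - 2/beta) in K by (unfold x; field; lra).
  lra.
Qed.

Lemma Sm_neg beta u : 0 < beta -> 0 < u -> 2/3 < beta * u -> Sm beta u < 0.
Proof.
  intros Hb Hu H. unfold Sm. rewrite <- Rinv_mult.
  assert (/ (beta * u) < / (2/3)) by (apply Rinv_lt_contravar; nra).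
  replace (/ (2/3)) with (3/2) in H0 by field. lra.
Qed.

Lemma Sm_pos beta u : 0 < beta -> 0 < u -> beta * u < 2/3 -> 0 < Sm beta u.
Proof.
  intros Hb Hu H. unfold Sm. rewrite <- Rinv_mult.
  assert (/ (2/3) < / (beta * u)) by (apply Rinv_lt_contravar; nra).
  replace (/ (2/3)) with (3/2) in H0 by field. lra.
Qed.

Lemma m_small r m : 0 < r -> is_m0 r m -> m < 1/4.
Proof.
  intros Hr [[Hm0 Hmk] Hh]. unfold kr in Hmk.
  destruct (Rlt_dec m (1/4)) as [H|H]; auto.
  assert (hfun m < 0) by (apply H2; lra). lra.
Qed.

Lemma u_facts beta r m u : 2 < beta -> 0 < r -> is_m0 r m -> m < u < kr r -> ffun r u = beta ->
  0 < u /\ u < 1/3 /\ D1c beta r u u = 0 /\ Sp beta u < 0 /\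
  2/(9*beta) < u*(1-2*u) /\ Rf beta u = r.
Proof.
  intros Hb Hr Hm [Hmu Huk] Hf.
  assert (Hm4 := m_small r m Hr Hm).
  destruct Hm as [[Hm0 Hmk] Hh]. unfold kr in *.
  assert (Hhu : hfun u < r).
  { destruct (Rle_dec u (1/4)). - rewrite <- Hh. apply H1; lra. - assert (hfun u < 0) by (apply H2; lra). lra. }
  assert (Hl : 0 < ell u) by (apply ell_pos; lra).
  assert (Hd : 0 < 1 - r - 3*u) by lra.
  assert (HR := Rf_sol beta r u ltac:(lra) ltac:(lra) ltac:(lra) ltac:(lra) Hf).
  split. lra. split. lra.
  split. { apply crit_of_f; auto; lra. }
  split.
  { rewrite (Sp_eq beta r u) by (auto; lra).
    assert (0 < 3 / (2 * ell u * (u * (1 - 2*u)))).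
    { apply Rdiv_lt_0_compat. lra. apply Rmult_lt_0_compat. lra. nra. }
    assert (0 < 3 / (2 * ell u * (u * (1 - 2*u))) * (r - hfun u)) by (apply Rmult_lt_0_compat; lra).
    lra. }
  split; auto.
  assert (E : hfun u - r = (1 - r - 3*u) - 3*u*(1-2*u)*ell u) by (unfold hfun, ell; ring).
  unfold Rf in HR.
  assert (Ed : 1 - r - 3*u = 2/(3*beta) * ell u) by lra.
  assert (K : 2/(3*beta) * ell u < 3*u*(1-2*u) * ell u) by lra.
  apply Rmult_lt_reg_r in K; auto.
  assert (2/(9*beta) = 2/(3*beta)/3) by (field; lra). lra.
Qed.

Lemma ustar_in beta : 2 < beta -> 2/(9*beta) < 2/(3*beta) * (1 - 2 * (2/(3*beta))).
Proof.
  intros Hb.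
  assert (E : 2/(3*beta) * (1 - 2 * (2/(3*beta))) - 2/(9*beta) = 4/(9*beta) * (1 - 2/beta)) by (field; lra).
  assert (0 < 4/(9*beta)) by (apply Rdiv_lt_0_compat; lra).
  assert (2/beta < 1). { apply Rmult_lt_reg_r with beta; [lra|]. field_simplify; lra. }
  assert (0 < 4/(9*beta) * (1 - 2/beta)) by (apply Rmult_lt_0_compat; lra). lra.
Qed.

Theorem lemma5p4 (beta r2 : R) (Hbeta : 2 < beta) (Hr2 : is_r2 beta r2) :
  (forall r m p, 0 < r < r2 -> is_m0 r m -> 0 < p < m -> ffun r p = beta ->
     local_min_Xi (Fbeta beta r) p p) /\
  (forall r q, 0 < r -> 1 / 3 < q < 1 / 2 -> ffun r q = beta ->
     saddle (Fbeta beta r) q q) /\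
  (forall r m u, 0 < r < r1 beta -> is_m0 r m -> m < u < kr r -> ffun r u = beta ->
     local_max_Xi (Fbeta beta r) u u) /\
  (forall r m u, r1 beta < r < r2 -> is_m0 r m -> m < u < kr r -> ffun r u = beta ->
     saddle (Fbeta beta r) u u).
Proof.
  assert (Hus := ustar_in beta Hbeta).
  assert (Hus2 : 0 < 2/(3*beta)) by (apply Rdiv_lt_0_compat; lra).
  assert (Hus3 : 2/(3*beta) < 1/3). { apply Rmult_lt_reg_r with (3*beta); [lra|]. field_simplify; lra. }
  assert (HRs := Rf_star beta Hbeta).
  split; [|split; [|split]].
  - intros r m p [Hr0 Hr] Hm [Hp0 Hpm] Hf.
    assert (Hm4 := m_small r m Hr0 Hm).
    destruct Hm as [[Hm0 Hmk] Hh]. unfold kr in *.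
    assert (Hhp : r < hfun p) by (rewrite <- Hh; apply H1; lra).
    assert (Hl : 0 < ell p) by (apply ell_pos; lra).
    assert (Hd : 0 < 1 - r - 3*p) by lra.
    apply local_min_diag; try lra.
    + apply crit_of_f; lra.
    + rewrite (Sp_eq beta r p) by (auto; lra).
      assert (0 < 3 / (2 * ell p * (p * (1 - 2*p)))).
      { apply Rdiv_lt_0_compat. lra. apply Rmult_lt_0_compat. lra. nra. }
      apply Rmult_lt_0_compat; lra.
    + rewrite (Sm_eq beta r p) by (auto; lra).
      assert (0 < 3 / (2 * ell p * p)).
      { apply Rdiv_lt_0_compat. lra. apply Rmult_lt_0_compat; lra. }
      assert (E : hfun p - r = (1 - r - 3*p) - 3*p*(1-2*p)*ell p) by (unfold hfun, ell; ring).
      assert (0 <= (3*(1-2*p) - 1) * p * ell p) by (apply Rmult_le_pos; [apply Rmult_le_pos|]; lra).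
      apply Rmult_lt_0_compat; nra.
  - intros r q Hr [Hq1 Hq2] Hf.
    assert (Hl : ell q < 0) by (apply ell_neg; lra).
    assert (Hh := h_neg2 q Hq1 Hq2).
    apply saddle_diag; try lra.
    + apply crit_of_f; lra.
    + left. split.
      * rewrite (Sp_eq beta r q) by (auto; lra).
        assert (0 < 3 / (2 * (- ell q) * (q * (1 - 2*q)))).
        { apply Rdiv_lt_0_compat. lra. apply Rmult_lt_0_compat. lra. nra. }
        replace (3 / (2 * ell q * (q * (1 - 2 * q))) * (hfun q - r)) with
          (3 / (2 * (- ell q) * (q * (1 - 2*q))) * (r - hfun q)) by (field; repeat split; nra).
        apply Rmult_lt_0_compat; lra.
      * apply Sm_neg; nra.
  - intros r m u [Hr0 Hr] Hm Hu Hf.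
    destruct (u_facts beta r m u Hbeta Hr0 Hm Hu Hf) as [Hu0 [Hu3 [Hc [Hp [HI HR]]]]].
    apply local_max_diag; try lra.
    apply Sm_neg; try lra.
    destruct (total_order_T u (2/(3*beta))) as [[H|H]|H].
    + assert (Rf beta (2/(3*beta)) < Rf beta u) by (apply Rmono; lra). lra.
    + subst u. lra.
    + assert (K : beta * (2/(3*beta)) < beta * u) by (apply Rmult_lt_compat_l; lra).
      replace (beta * (2/(3*beta))) with (2/3) in K by (field; lra). lra.
  - intros r m u [Hr0 Hr] Hm Hu Hf.
    assert (Hr1 := r1_pos beta Hbeta).
    destruct (u_facts beta r m u Hbeta ltac:(lra) Hm Hu Hf) as [Hu0 [Hu3 [Hc [Hp [HI HR]]]]].
    apply saddle_diag; try lra. right. split; auto.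
    apply Sm_pos; try lra.
    destruct (total_order_T u (2/(3*beta))) as [[H|H]|H].
    + assert (K : beta * u < beta * (2/(3*beta))) by (apply Rmult_lt_compat_l; lra).
      replace (beta * (2/(3*beta))) with (2/3) in K by (field; lra). lra.
    + subst u. lra.
    + assert (Rf beta u < Rf beta (2/(3*beta))) by (apply Rmono; lra). lra.
Qed.
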